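(* Let $T:l_\infty\to l_\infty$ be a continuous positive linear map with adjoint $T^*$. Then the set $\Delta(T^* )=\{p\in\Delta: p\text{ is an eigenvector of }T^*\}$ is nonempty and weak$^\star$-closed.
   Context: $l_\infty$: real bounded sequences indexed by $\mathbb N$ with sup norm. $ba(\mathbb N)$: norm dual of $l_\infty$ (bounded finitely additive signed measures on $2^{\mathbb N}$), pairing $\langle x,\mu\rangle$, weak$^\star$ topology. The adjoint $T^*:ba(\mathbb N)\to ba(\mathbb N)$ is defined by $\langle x,T^*(\mu)\rangle=\langle T(x),\mu\rangle$ for all $x,\mu$. $\Delta$ is the set of finitely additive probability measures on $2^{\mathbb N}$, i.e. $\mu\in ba(\mathbb N)$ with $\mu\ge0$ and $\mu(\mathbb N)=1$. An eigenvector of $T^*$ is a nonzero $\mu\in ba(\mathbb N)$ such that $T^*(\mu)=\lambda\mu$ for some $\lambda\in\mathbb R$. *)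

(* Defs.v *)
From Stdlib Require Import Reals Lra List.
Open Scope R_scope.

Definition bounded (x : nat -> R) : Prop := exists M, forall n, Rabs (x n) <= M.

Record linf := mk_linf { lv :> nat -> R; lv_bounded : bounded lv }.

Lemma lin_comb_bounded (a b : R) (x y : linf) :
  bounded (fun n => a * x n + b * y n).
Proof.
  destruct (lv_bounded x) as [Mx Hx]; destruct (lv_bounded y) as [My Hy].
  exists (Rabs a * Mx + Rabs b * My); intro n.
  eapply Rle_trans; [apply Rabs_triang|].
  rewrite !Rabs_mult.
  apply Rplus_le_compat; apply Rmult_le_compat_l; auto using Rabs_pos.
Qed.

Definition lin_comb (a b : R) (x y : linf) : linf :=
  mk_linf (fun n => a * x n + b * y n) (lin_comb_bounded a b x y).

Lemma one_bounded : bounded (fun _ => 1).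
Proof. exists 1; intro n; rewrite Rabs_R1; lra. Qed.

Definition linf_one : linf := mk_linf (fun _ => 1) one_bounded.

Definition dist_lt (x y : linf) (r : R) : Prop :=
  exists s, s < r /\ forall n, Rabs (x n - y n) <= s.

Definition nonneg (x : linf) : Prop := forall n, 0 <= x n.

Definition op_linear (T : linf -> linf) : Prop :=
  forall a b x y n, T (lin_comb a b x y) n = a * T x n + b * T y n.

Definition op_continuous (T : linf -> linf) : Prop :=
  forall x eps, 0 < eps -> exists delta, 0 < delta /\
    forall y, dist_lt x y delta -> dist_lt (T x) (T y) eps.

Definition op_positive (T : linf -> linf) : Prop :=
  forall x, nonneg x -> nonneg (T x).

(* ba(N) = norm dual of l_infty: continuous linear functionals *)
Definition is_ba (mu : linf -> R) : Prop :=
  (forall a b x y, mu (lin_comb a b x y) = a * mu x + b * mu y) /\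
  (forall x eps, 0 < eps -> exists delta, 0 < delta /\
    forall y, dist_lt x y delta -> Rabs (mu x - mu y) < eps).

Definition adjoint (T : linf -> linf) (mu : linf -> R) : linf -> R :=
  fun x => mu (T x).

Definition eigenvector_of_adjoint (T : linf -> linf) (mu : linf -> R) : Prop :=
  is_ba mu /\ (exists x, mu x <> 0) /\
  exists lam : R, forall x, adjoint T mu x = lam * mu x.

(* Delta: finitely additive probability measures, i.e. positive functionals
   with <1_N, mu> = 1 *)
Definition in_Delta (mu : linf -> R) : Prop :=
  is_ba mu /\ (forall x, nonneg x -> 0 <= mu x) /\ mu linf_one = 1.

Definition Delta_T (T : linf -> linf) (mu : linf -> R) : Prop :=
  in_Delta mu /\ eigenvector_of_adjoint T mu.

(* weak* closedness of a subset S of ba(N): its complement is weak*-open,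
   i.e. each point outside S has a basic weak* neighbourhood missing S *)
Definition weak_star_closed (S : (linf -> R) -> Prop) : Prop :=
  forall mu, is_ba mu -> ~ S mu ->
    exists (xs : list linf) (eps : R), 0 < eps /\
      forall nu, is_ba nu ->
        (forall x, In x xs -> Rabs (nu x - mu x) < eps) -> ~ S nu.

(* Main.v *)
Require Import Defs.
From Stdlib Require Import Reals List Lra Classical ClassicalEpsilon FunctionalExtensionality.
Open Scope R_scope.

Lemma linf_bound (x : linf) : exists M, 0 < M /\ forall n, Rabs (x n) <= M.
Proof.
  destruct (lv_bounded x) as [M HM]. exists (Rabs M + 1). split.
  - pose proof (Rabs_pos M); lra.
  - intro n. pose proof (HM n). pose proof (Rle_abs M). lra.
Qed.

Definition Aplus (T : linf -> linf) (lam : R) : Prop :=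
  exists w : linf, Defs.nonneg w /\ exists e, 0 < e /\ forall n, T w n <= lam * w n - e.

Lemma Aplus_pos T lam : op_positive T -> Aplus T lam -> 0 < lam.
Proof.
  intros Tpos [w [Hw [e [He H]]]].
  pose proof (Tpos w Hw 0%nat). pose proof (H 0%nat). pose proof (Hw 0%nat).
  destruct (Rle_or_lt lam 0); [|lra].
  assert (lam * w 0%nat <= 0) by nra. lra.
Qed.

Lemma min_principle T lam (w z : linf) e :
  op_linear T -> op_positive T -> Defs.nonneg w -> 0 < e ->
  (forall n, T w n <= lam * w n - e) -> (forall n, T z n <= lam * z n) -> Defs.nonneg z.
Proof.
  intros Tlin Tpos Hw He HTw HTz.
  assert (Hlam : 0 < lam) by (apply (Aplus_pos T lam Tpos); exists w; split; auto; exists e; auto).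
  assert (Hwc : forall n, e / lam <= w n).
  { intro n. pose proof (Tpos w Hw n). pose proof (HTw n).
    apply (Rmult_le_reg_l lam); auto. field_simplify; lra. }
  assert (Hc : 0 < e / lam) by (apply Rdiv_lt_0_compat; auto).
  destruct (linf_bound z) as [Mz [HMz HzM]].
  destruct (linf_bound w) as [Mw [HMw HwM]].
  set (E := fun r => exists n, r = - z n / w n).
  assert (Hwp : forall n, 0 < w n) by (intro n; specialize (Hwc n); lra).
  assert (Hq : forall n, - z n / w n * w n = - z n) by (intro n; field; specialize (Hwp n); lra).
  assert (Hb : bound E).
  { exists (Mz / (e / lam)). intros r [n ->].
    specialize (Hq n). specialize (HzM n). specialize (Hwc n). specialize (Hwp n).
    set (q := - z n / w n) in *. pose proof (Rle_abs (- z n)). rewrite Rabs_Ropp in H.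
    apply (Rmult_le_reg_l (e/lam)); auto.
    replace (e / lam * (Mz / (e / lam))) with Mz by (field; lra).
    destruct (Rle_or_lt q 0). { nra. }
    nra. }
  assert (Hne : exists r, E r) by (exists (- z 0%nat / w 0%nat); exists 0%nat; auto).
  destruct (completeness E Hb Hne) as [m [Hub Hlub]].
  intro n0. destruct (Rle_or_lt 0 (z n0)) as [|Hneg]; auto. exfalso.
  assert (Hm : 0 < m).
  { assert (E (- z n0 / w n0)) by (exists n0; auto). specialize (Hub _ H).
    assert (0 < - z n0 / w n0). { apply Rdiv_lt_0_compat; [lra|auto]. } lra. }
  assert (Hu : forall n, 0 <= z n + m * w n).
  { intro n. assert (E (- z n / w n)) by (exists n; auto). specialize (Hub _ H).
    specialize (Hq n). specialize (Hwp n). nra. }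
  set (u := lin_comb 1 m z w).
  assert (Hun : forall n, u n = z n + m * w n) by (intro n; simpl; ring).
  assert (Hupos : Defs.nonneg u) by (intro n; rewrite Hun; auto).
  assert (HTu : forall n, T u n = T z n + m * T w n) by (intro n; unfold u; rewrite Tlin; ring).
  set (k := m * e / (lam * Mw)).
  assert (Hk : 0 < k) by (unfold k; apply Rdiv_lt_0_compat; nra).
  assert (Hub2 : is_upper_bound E (m - k)).
  { intros r [n ->]. pose proof (Tpos u Hupos n). rewrite HTu in H.
    pose proof (HTz n). pose proof (HTw n). pose proof (Hwp n).
    assert (H3 : m * e / lam <= z n + m * w n).
    { apply (Rmult_le_reg_l lam); auto. field_simplify; [|lra]. nra. }
    assert (H4 : k * w n <= m * e / lam).
    { unfold k. pose proof (HwM n) as HH. rewrite Rabs_right in HH by lra.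
      replace (m * e / (lam * Mw) * w n) with ((m * e / lam) * (w n / Mw)) by (field; lra).
      assert (w n / Mw <= 1). { apply (Rmult_le_reg_l Mw); auto. replace (Mw * (w n / Mw)) with (w n) by (field; lra). lra. }
      assert (0 <= m * e / lam). { apply Rlt_le, Rdiv_lt_0_compat; nra. }
      assert (0 <= w n / Mw). { apply Rlt_le, Rdiv_lt_0_compat; nra. }
      nra. }
    specialize (Hq n). set (q := - z n / w n) in *. nra. }
  specialize (Hlub _ Hub2). lra.
Qed.
Lemma Aplus_ne T : op_linear T -> exists l, Aplus T l.
Proof.
  intros Tlin. destruct (linf_bound (T linf_one)) as [M [HM HMb]].
  exists (M + 1). exists linf_one. split. { intro n; simpl; lra. }
  exists 1. split; [lra|]. intro n. simpl. specialize (HMb n).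
  pose proof (Rle_abs (T linf_one n)). lra.
Qed.

Lemma lam0_exists T : op_linear T -> op_positive T ->
  exists l0, (forall l, Aplus T l -> l0 <= l) /\
    (forall eta, 0 < eta -> exists l, Aplus T l /\ l < l0 + eta).
Proof.
  intros Tlin Tpos.
  set (E := fun r => exists l, Aplus T l /\ r = - l).
  assert (Hb : bound E).
  { exists 0. intros r [l [Hl ->]]. pose proof (Aplus_pos T l Tpos Hl). lra. }
  assert (Hne : exists r, E r).
  { destruct (Aplus_ne T Tlin) as [l Hl]. exists (-l). exists l; auto. }
  destruct (completeness E Hb Hne) as [m [Hub Hlub]].
  exists (- m). split.
  - intros l Hl. assert (E (-l)) by (exists l; auto). specialize (Hub _ H). lra.
  - intros eta Heta. apply NNPP. intro Hno.
    assert (is_upper_bound E (m - eta)).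
    { intros r [l [Hl ->]]. destruct (Rle_or_lt (-l) (m - eta)); auto.
      exfalso. apply Hno. exists l. split; auto. lra. }
    specialize (Hlub _ H). lra.
Qed.

Lemma key T l0 : op_linear T -> op_positive T ->
  (forall l, Aplus T l -> l0 <= l) ->
  (forall eta, 0 < eta -> exists l, Aplus T l /\ l < l0 + eta) ->
  ~ exists (x : linf) e, 0 < e /\ forall n, T x n <= l0 * x n - e.
Proof.
  intros Tlin Tpos Hinf Happ [x [e [He Hx]]].
  destruct (linf_bound x) as [M [HM HxM]].
  destruct (Happ (e / (2 * M))) as [l [Hl Hll]].
  { apply Rdiv_lt_0_compat; lra. }
  pose proof (Hinf l Hl) as Hl0.
  assert (Hd : (l - l0) * M <= e / 2).
  { assert (l - l0 <= e / (2 * M)) by lra.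
    replace (e/2) with (e / (2 * M) * M) by (field; lra). nra. }
  assert (Hxpos : Defs.nonneg x).
  { destruct Hl as [w [Hw [ew [Hew HTw]]]].
    apply (min_principle T l w x ew Tlin Tpos Hw Hew HTw).
    intro n. specialize (Hx n). specialize (HxM n).
    pose proof (Rle_abs (x n)). pose proof (Rle_abs (- x n)). rewrite Rabs_Ropp in H0.
    assert (- ((l - l0) * x n) <= (l - l0) * M) by nra. nra. }
  set (d := e / (2 * M)).
  assert (Hdp : 0 < d) by (unfold d; apply Rdiv_lt_0_compat; lra).
  assert (Aplus T (l0 - d)).
  { exists x. split; auto. exists (e / 2). split; [lra|]. intro n.
    specialize (Hx n). specialize (HxM n). specialize (Hxpos n).
    rewrite Rabs_right in HxM by lra.
    assert (d * x n <= e / 2).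
    { replace (e/2) with (d * M) by (unfold d; field; lra). nra. }
    nra. }
  specialize (Hinf _ H). lra.
Qed.
Definition lc (a b : R) (u v : nat -> R) : nat -> R := fun n => a * u n + b * v n.
Record ppf := mkpf { PDm : (nat -> R) -> Prop; Pfv : (nat -> R) -> R }.
Definition Vw (T : linf -> linf) l0 (w : linf) : nat -> R := fun n => T w n - l0 * w n.
Definition one : nat -> R := fun _ => 1.
Definition NoBad (T : linf -> linf) l0 :=
  ~ exists (x : linf) e, 0 < e /\ forall n, T x n <= l0 * x n - e.

Definition good T l0 (p : ppf) : Prop :=
 (forall a b u v, PDm p u -> PDm p v -> PDm p (lc a b u v)) /\
 (forall u, PDm p u -> Defs.bounded u) /\
 (forall a b u v, PDm p u -> PDm p v -> Pfv p (lc a b u v) = a * Pfv p u + b * Pfv p v) /\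
 (forall u s, PDm p u -> (forall n, u n <= s) -> Pfv p u <= s) /\
 PDm p one /\ Pfv p one = 1 /\
 (forall w, PDm p (Vw T l0 w) /\ Pfv p (Vw T l0 w) = 0).

Definition ext (p q : ppf) := forall u, PDm p u -> PDm q u /\ Pfv q u = Pfv p u.

Lemma bounded_lc a b u v : Defs.bounded u -> Defs.bounded v -> Defs.bounded (lc a b u v).
Proof.
  intros [Mx Hx] [My Hy].
  exists (Rabs a * Mx + Rabs b * My); intro n. unfold lc.
  eapply Rle_trans; [apply Rabs_triang|].
  rewrite !Rabs_mult.
  apply Rplus_le_compat; apply Rmult_le_compat_l; auto using Rabs_pos.
Qed.

Lemma Vw_lin T l0 a b w w' n : op_linear T ->
  Vw T l0 (lin_comb a b w w') n = a * Vw T l0 w n + b * Vw T l0 w' n.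
Proof. intros Tlin. unfold Vw. rewrite Tlin. simpl. ring. Qed.

Definition zl : linf := lin_comb 0 0 linf_one linf_one.
Lemma T_zl T n : op_linear T -> T zl n = 0.
Proof. intros Tlin. unfold zl. rewrite Tlin. ring. Qed.

Lemma uniq_rep T l0 a a' w w' : op_linear T -> NoBad T l0 ->
  (forall n, a + Vw T l0 w n = a' + Vw T l0 w' n) -> a = a'.
Proof.
  intros Tlin NB H. destruct (Rtotal_order a a') as [Hlt|[Heq|Hgt]]; auto; exfalso; apply NB.
  - (* Vw w - Vw w' = a' - a > 0 ; use -(w - w') *)
    exists (lin_comb (-1) 1 w w'). exists (a' - a). split; [lra|]. intro n.
    pose proof (Vw_lin T l0 (-1) 1 w w' n Tlin). specialize (H n). unfold Vw in *.
    simpl in *. lra.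
  - exists (lin_comb 1 (-1) w w'). exists (a - a'). split; [lra|]. intro n.
    pose proof (Vw_lin T l0 1 (-1) w w' n Tlin). specialize (H n). unfold Vw in *.
    simpl in *. lra.
Qed.

Definition Dm0 T l0 (u : nat -> R) := exists a w, forall n, u n = a + Vw T l0 w n.
Definition fv0 T l0 (u : nat -> R) :=
  epsilon (inhabits 0) (fun a => exists w, forall n, u n = a + Vw T l0 w n).

Lemma fv0_eq T l0 u a w : op_linear T -> NoBad T l0 ->
  (forall n, u n = a + Vw T l0 w n) -> fv0 T l0 u = a.
Proof.
  intros Tlin NB H. unfold fv0.
  destruct (epsilon_spec (inhabits 0) (fun a => exists w, forall n, u n = a + Vw T l0 w n))
    as [w' Hw']; [exists a, w; auto|].
  eapply uniq_rep; eauto. intro n. rewrite <- Hw', <- H. reflexivity.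
Qed.

Lemma good0 T l0 : op_linear T -> NoBad T l0 -> good T l0 (mkpf (Dm0 T l0) (fv0 T l0)).
Proof.
  intros Tlin NB. unfold good; cbn [PDm Pfv]. repeat split.
  - intros a b u v [a1 [w1 H1]] [a2 [w2 H2]]. exists (a * a1 + b * a2), (lin_comb a b w1 w2).
    intro n. rewrite Vw_lin by auto. unfold lc. rewrite H1, H2. ring.
  - intros u [a [w H]].
    destruct (lv_bounded (T w)) as [M1 H1]. destruct (lv_bounded w) as [M2 H2].
    exists (Rabs a + M1 + Rabs l0 * M2). intro n. rewrite H. unfold Vw.
    eapply Rle_trans; [apply Rabs_triang|]. unfold Rminus.
    eapply Rle_trans; [apply Rplus_le_compat_l; apply Rabs_triang|].
    rewrite Rabs_Ropp, Rabs_mult. specialize (H1 n). specialize (H2 n).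
    pose proof (Rabs_pos l0). assert (Rabs l0 * Rabs (w n) <= Rabs l0 * M2) by nra. lra.
  - intros a b u v [a1 [w1 H1]] [a2 [w2 H2]].
    rewrite (fv0_eq T l0 u a1 w1), (fv0_eq T l0 v a2 w2) by auto.
    apply (fv0_eq T l0 _ _ (lin_comb a b w1 w2)); auto.
    intro n. rewrite Vw_lin by auto. unfold lc. rewrite H1, H2. ring.
  - intros u s [a [w H]] Hs. rewrite (fv0_eq T l0 u a w) by auto.
    destruct (Rle_or_lt a s); auto. exfalso. apply NB. exists w, (a - s). split; [lra|].
    intro n. specialize (Hs n). rewrite H in Hs. unfold Vw in Hs. lra.
  - exists 1, zl. intro n. unfold Vw, one. rewrite T_zl by auto. simpl. ring.
  - apply (fv0_eq T l0 _ _ zl); auto. intro n. unfold Vw, one. rewrite T_zl by auto. simpl. ring.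
  - exists 0, w. intro n. ring.
  - apply (fv0_eq T l0 _ _ w); auto. intro n. ring.
Qed.
Section Chain.
Variable T : linf -> linf.
Variable l0 : R.
Let G := {p : ppf | good T l0 p}.
Variable A : G -> Prop.
Variable s0 : G.
Hypothesis As0 : A s0.
Hypothesis tot : forall s t, A s -> A t -> ext (proj1_sig s) (proj1_sig t) \/ ext (proj1_sig t) (proj1_sig s).

Definition Du (u : nat -> R) := exists s, A s /\ PDm (proj1_sig s) u.
Definition fu (u : nat -> R) :=
  epsilon (inhabits 0) (fun v => exists s, A s /\ PDm (proj1_sig s) u /\ Pfv (proj1_sig s) u = v).

Lemma fu_eq s u : A s -> PDm (proj1_sig s) u -> fu u = Pfv (proj1_sig s) u.
Proof.
  intros As Ds. unfold fu.
  destruct (epsilon_spec (inhabits 0)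
    (fun v => exists s, A s /\ PDm (proj1_sig s) u /\ Pfv (proj1_sig s) u = v))
    as [s' [As' [Ds' Hv]]]; [exists (Pfv (proj1_sig s) u), s; auto|].
  rewrite <- Hv. destruct (tot s s' As As') as [H|H].
  - destruct (H u Ds); auto.
  - destruct (H u Ds'); auto.
Qed.

Lemma common s1 s2 u v : A s1 -> A s2 -> PDm (proj1_sig s1) u -> PDm (proj1_sig s2) v ->
  exists s, A s /\ PDm (proj1_sig s) u /\ PDm (proj1_sig s) v.
Proof.
  intros A1 A2 D1 D2. destruct (tot s1 s2 A1 A2) as [H|H].
  - exists s2. repeat split; auto. apply (H u D1).
  - exists s1. repeat split; auto. apply (H v D2).
Qed.

Lemma good_union : good T l0 (mkpf Du fu).
Proof.
  unfold good; cbn [PDm Pfv]. repeat split.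
  - intros a b u v [s1 [A1 D1]] [s2 [A2 D2]].
    destruct (common s1 s2 u v A1 A2 D1 D2) as [s [As [Du' Dv]]].
    exists s. split; auto. destruct (proj2_sig s) as [Hc _]. auto.
  - intros u [s [As Ds]]. destruct (proj2_sig s) as [_ [Hb _]]. auto.
  - intros a b u v [s1 [A1 D1]] [s2 [A2 D2]].
    destruct (common s1 s2 u v A1 A2 D1 D2) as [s [As [Du' Dv]]].
    destruct (proj2_sig s) as [Hc [_ [Hl _]]].
    rewrite (fu_eq s u), (fu_eq s v), (fu_eq s (lc a b u v)); auto.
  - intros u t [s [As Ds]] Hs. rewrite (fu_eq s u); auto.
    destruct (proj2_sig s) as [_ [_ [_ [Hd _]]]]. auto.
  - exists s0. split; auto. destruct (proj2_sig s0) as [_ [_ [_ [_ [H _]]]]]. auto.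
  - destruct (proj2_sig s0) as [_ [_ [_ [_ [H [H' _]]]]]]. rewrite (fu_eq s0); auto.
  - exists s0. split; auto. destruct (proj2_sig s0) as [_ [_ [_ [_ [_ [_ H]]]]]]. apply H.
  - destruct (proj2_sig s0) as [_ [_ [_ [_ [_ [_ H]]]]]]. rewrite (fu_eq s0); auto; apply H.
Qed.

Lemma union_ub s : A s -> ext (proj1_sig s) (mkpf Du fu).
Proof.
  intros As u Ds. cbn [PDm Pfv]. split.
  - exists s; auto.
  - apply fu_eq; auto.
Qed.
End Chain.
Section Extend.
Variable T : linf -> linf.
Variable l0 : R.
Variable p : ppf.
Hypothesis gp : good T l0 p.
Variable y : nat -> R.
Hypothesis yb : Defs.bounded y.
Hypothesis ny : ~ PDm p y.

Let Dc : forall a b u v, PDm p u -> PDm p v -> PDm p (lc a b u v).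
Proof. destruct gp as [H _]; exact H. Qed.
Let Dl : forall a b u v, PDm p u -> PDm p v -> Pfv p (lc a b u v) = a * Pfv p u + b * Pfv p v.
Proof. destruct gp as [_ [_ [H _]]]; exact H. Qed.
Let Dd : forall u s, PDm p u -> (forall n, u n <= s) -> Pfv p u <= s.
Proof. destruct gp as [_ [_ [_ [H _]]]]; exact H. Qed.
Let Done : PDm p one.
Proof. destruct gp as [_ [_ [_ [_ [H _]]]]]; exact H. Qed.
Let Dbd : forall u, PDm p u -> Defs.bounded u.
Proof. destruct gp as [_ [H _]]; exact H. Qed.

Definition zf := lc 0 0 one one.
Let Dz : PDm p zf.
Proof. apply Dc; auto. Qed.
Let fz : Pfv p zf = 0.
Proof. unfold zf. rewrite Dl by auto. ring. Qed.

Let LU d1 s1 d2 s2 : PDm p d1 -> PDm p d2 -> (forall n, d1 n - y n <= s1) ->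
  (forall n, d2 n + y n <= s2) -> Pfv p d1 - s1 <= s2 - Pfv p d2.
Proof.
  intros D1 D2 H1 H2.
  assert (Pfv p (lc 1 1 d1 d2) <= s1 + s2).
  { apply Dd; auto. intro n. unfold lc. specialize (H1 n). specialize (H2 n). lra. }
  rewrite Dl in H by auto. lra.
Qed.

Definition Lset (l : R) := exists d s, PDm p d /\ (forall n, d n - y n <= s) /\ l = Pfv p d - s.

Lemma c_exists : exists c,
  (forall d1 s1, PDm p d1 -> (forall n, d1 n - y n <= s1) -> Pfv p d1 - s1 <= c) /\
  (forall d2 s2, PDm p d2 -> (forall n, d2 n + y n <= s2) -> c <= s2 - Pfv p d2).
Proof.
  destruct yb as [My HMy].
  assert (Hb : bound Lset).
  { exists (My - Pfv p zf). intros l [d [s [Dd' [Hs ->]]]]. apply LU; auto.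
    intro n. unfold zf, lc, one. specialize (HMy n). pose proof (Rle_abs (y n)). lra. }
  assert (Hne : exists l, Lset l).
  { exists (Pfv p zf - My). exists zf, My. repeat split; auto.
    intro n. unfold zf, lc, one. specialize (HMy n).
    pose proof (Rle_abs (- y n)). rewrite Rabs_Ropp in H. lra. }
  destruct (completeness Lset Hb Hne) as [c [Hub Hlub]].
  exists c. split.
  - intros d1 s1 D1 H1. apply Hub. exists d1, s1. auto.
  - intros d2 s2 D2 H2. apply Hlub. intros l [d [s [Dd' [Hs ->]]]]. apply LU; auto.
Qed.

Lemma ext_exists : exists q, good T l0 q /\ ext p q /\ PDm q y.
Proof.
  destruct c_exists as [c [Hc1 Hc2]].
  set (D' := fun u => exists t, PDm p (lc 1 (-t) u y)).
  set (f' := fun u => epsilon (inhabits 0)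
     (fun v => exists t, PDm p (lc 1 (-t) u y) /\ v = Pfv p (lc 1 (-t) u y) + t * c)).
  assert (Huniq : forall u t t', PDm p (lc 1 (-t) u y) -> PDm p (lc 1 (-t') u y) -> t = t').
  { intros u t t' H1 H2. apply NNPP. intro Hne. apply ny.
    replace y with (lc (1/(t - t')) (-1/(t-t')) (lc 1 (-t') u y) (lc 1 (-t) u y)).
    - apply Dc; auto.
    - apply functional_extensionality. intro n. unfold lc. field. intro; apply Hne; lra. }
  assert (Hf' : forall u t, PDm p (lc 1 (-t) u y) -> f' u = Pfv p (lc 1 (-t) u y) + t * c).
  { intros u t H. unfold f'.
    destruct (epsilon_spec (inhabits 0)
      (fun v => exists t, PDm p (lc 1 (-t) u y) /\ v = Pfv p (lc 1 (-t) u y) + t * c))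
      as [t' [H' ->]]; [exists (Pfv p (lc 1 (-t) u y) + t * c), t; auto|].
    rewrite (Huniq u t' t H' H). reflexivity. }
  assert (Hid : forall u, lc 1 (-0) u y = u).
  { intro u. apply functional_extensionality. intro n. unfold lc. ring. }
  assert (Hext : ext p (mkpf D' f')).
  { intros u Du. cbn [PDm Pfv]. split.
    - exists 0. rewrite Hid. auto.
    - rewrite (Hf' u 0) by (rewrite Hid; auto). rewrite Hid. ring. }
  exists (mkpf D' f'). split; [|split; auto].
  2:{ cbn [PDm]. exists 1.
      assert (E : lc 1 (- (1)) y y = zf).
      { apply functional_extensionality. intro n. unfold zf, lc, one. ring. }
      rewrite E. exact Dz. }
  unfold good; cbn [PDm Pfv]. repeat split.
  - intros a b u v [t1 H1] [t2 H2]. exists (a * t1 + b * t2).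
    replace (lc 1 (-(a*t1+b*t2)) (lc a b u v) y) with (lc a b (lc 1 (-t1) u y) (lc 1 (-t2) v y)).
    + apply Dc; auto.
    + apply functional_extensionality. intro n. unfold lc. ring.
  - intros u [t H]. replace u with (lc 1 t (lc 1 (-t) u y) y).
    + apply bounded_lc; auto.
    + apply functional_extensionality. intro n. unfold lc. ring.
  - intros a b u v [t1 H1] [t2 H2].
    assert (Hlc : lc 1 (-(a*t1+b*t2)) (lc a b u v) y = lc a b (lc 1 (-t1) u y) (lc 1 (-t2) v y)).
    { apply functional_extensionality. intro n. unfold lc. ring. }
    rewrite (Hf' u t1 H1), (Hf' v t2 H2), (Hf' (lc a b u v) (a*t1+b*t2)).
    + rewrite Hlc, Dl by auto. ring.
    + rewrite Hlc. apply Dc; auto.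
  - intros u s [t H] Hs. rewrite (Hf' u t H). set (d := lc 1 (-t) u y) in *.
    assert (Hdn : forall n, d n = u n - t * y n) by (intro n; unfold d, lc; ring).
    destruct (Rtotal_order t 0) as [Hlt|[Heq|Hgt]].
    + assert (Hd1 := Hc1 (lc (-1/t) 0 d d) (s / (-t))).
      rewrite Dl in Hd1 by auto.
      assert (Pfv p d * (-1/t) - s / (-t) <= c).
      { replace (Pfv p d * (-1/t)) with (-1 / t * Pfv p d + 0 * Pfv p d) by ring.
        apply Hd1. - apply Dc; auto.
        - intro n. unfold lc. rewrite Hdn. specialize (Hs n).
          replace (-1 / t * (u n - t * y n) + 0 * (u n - t * y n) - y n) with (u n / (-t)) by (field; lra).
          unfold Rdiv. apply Rmult_le_compat_r; [|auto]. left; apply Rinv_0_lt_compat; lra. }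
      assert (Hmul : (Pfv p d * (-1/t) - s / (-t)) * (-t) <= c * (-t)) by (apply Rmult_le_compat_r; lra).
      replace ((Pfv p d * (-1/t) - s / (-t)) * (-t)) with (Pfv p d - s) in Hmul by (field; lra).
      lra.
    + subst t. assert (Pfv p d <= s). { apply Dd; auto. intro n. rewrite Hdn. specialize (Hs n). lra. }
      lra.
    + assert (Hd2 := Hc2 (lc (1/t) 0 d d) (s / t)).
      assert (c <= s / t - (1/t * Pfv p d + 0 * Pfv p d)).
      { rewrite <- Dl by auto. apply Hd2. - apply Dc; auto.
        - intro n. unfold lc. rewrite Hdn. specialize (Hs n).
          replace (1 / t * (u n - t * y n) + 0 * (u n - t * y n) + y n) with (u n / t) by (field; lra).
          unfold Rdiv. apply Rmult_le_compat_r; [|auto]. left; apply Rinv_0_lt_compat; lra. }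
      assert (Hmul : c * t <= (s / t - (1/t * Pfv p d + 0 * Pfv p d)) * t) by (apply Rmult_le_compat_r; lra).
      replace ((s / t - (1/t * Pfv p d + 0 * Pfv p d)) * t) with (s - Pfv p d) in Hmul by (field; lra).
      lra.
  - apply (Hext one Done).
  - destruct (Hext one Done) as [_ E]. cbn [Pfv] in E. rewrite E. destruct gp as [_ [_ [_ [_ [_ [H _]]]]]]. auto.
  - destruct gp as [_ [_ [_ [_ [_ [_ H]]]]]]. destruct (H w) as [H1 _]. apply (Hext _ H1).
  - destruct gp as [_ [_ [_ [_ [_ [_ H]]]]]]. destruct (H w) as [H1 H2].
    destruct (Hext _ H1) as [_ E]. cbn [Pfv] in E. rewrite E. auto.
Qed.
End Extend.
From mathcomp Require boolp classical_sets.

Lemma maximal_exists T l0 : op_linear T -> NoBad T l0 ->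
  exists p, good T l0 p /\ forall y, Defs.bounded y -> PDm p y.
Proof.
  intros Tlin NB.
  set (G := {p : ppf | good T l0 p}).
  set (t0 := exist (good T l0) _ (good0 T l0 Tlin NB) : G).
  set (Rl := fun s t : G => boolp.asbool (ext (proj1_sig s) (proj1_sig t))).
  destruct (@classical_sets.ZL_preorder G t0 Rl) as [m Hm].
  - intro t. apply boolp.asboolT. intros u Du; auto.
  - intros r s t Hrs Hst. apply boolp.asboolT. apply boolp.asboolW in Hrs, Hst.
    intros u Du. destruct (Hrs u Du) as [D1 E1]. destruct (Hst u D1) as [D2 E2].
    split; auto. congruence.
  - intros A HA. destruct (classic (exists s, A s)) as [[s0 As0]|HnA].
    + assert (tot : forall s t, A s -> A t -> ext (proj1_sig s) (proj1_sig t) \/ ext (proj1_sig t) (proj1_sig s)).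
      { intros s t As At. destruct (HA s t As At) as [H|H]; [left|right]; apply boolp.asboolW; exact H. }
      exists (exist (good T l0) _ (good_union T l0 A s0 As0 tot)).
      intros s As. apply boolp.asboolT. apply (union_ub T l0 A tot s As).
    + exists t0. intros s As. exfalso. apply HnA. exists s; auto.
  - exists (proj1_sig m). split; [exact (proj2_sig m)|].
    intros y yb. apply NNPP. intro ny.
    destruct (ext_exists T l0 (proj1_sig m) (proj2_sig m) y yb ny) as [q [gq [eq Dq]]].
    assert (is_true (Rl m (exist (good T l0) q gq))) as Hr by (apply boolp.asboolT; exact eq).
    specialize (Hm _ Hr). apply boolp.asboolW in Hm. cbn in Hm.
    destruct (Hm y Dq); auto.
Qed.

Lemma delta_exists T : op_linear T -> op_positive T -> exists mu, Delta_T T mu.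
Proof.
  intros Tlin Tpos.
  destruct (lam0_exists T Tlin Tpos) as [l0 [Hinf Happ]].
  pose proof (key T l0 Tlin Tpos Hinf Happ) as NB.
  destruct (maximal_exists T l0 Tlin NB) as [p [gp Hall]].
  destruct gp as [Dc [Dbd [Dl [Dd [Done [Fone HV]]]]]].
  assert (HD : forall x : linf, PDm p (lv x)) by (intro x; apply Hall, lv_bounded).
  set (mu := fun x : linf => Pfv p (lv x)).
  assert (Hlin : forall a b x y, mu (lin_comb a b x y) = a * mu x + b * mu y).
  { intros a b x y. unfold mu. apply (Dl a b (lv x) (lv y)); auto. }
  exists mu. split; [split; [split|split]|split].
  - exact Hlin.
  - intros x eps Heps. exists eps. split; auto. intros y [s [Hs Hxy]].
    assert (H1 : Pfv p (lc 1 (-1) (lv x) (lv y)) <= s).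
    { apply Dd; [apply Dc; auto|]. intro n. specialize (Hxy n). unfold lc.
      pose proof (Rle_abs (x n - y n)). lra. }
    assert (H2 : Pfv p (lc (-1) 1 (lv x) (lv y)) <= s).
    { apply Dd; [apply Dc; auto|]. intro n. specialize (Hxy n). unfold lc.
      pose proof (Rle_abs (- (x n - y n))). rewrite Rabs_Ropp in H. lra. }
    rewrite Dl in H1, H2 by auto. unfold mu. apply Rabs_def1; lra.
  - intros x Hx. unfold mu.
    assert (H : Pfv p (lc (-1) 0 (lv x) (lv x)) <= 0).
    { apply Dd; [apply Dc; auto|]. intro n. specialize (Hx n). unfold lc. lra. }
    rewrite Dl in H by auto. lra.
  - exact Fone.
  - split; [exact Hlin|].
    intros x eps Heps. exists eps. split; auto. intros y [s [Hs Hxy]].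
    assert (H1 : Pfv p (lc 1 (-1) (lv x) (lv y)) <= s).
    { apply Dd; [apply Dc; auto|]. intro n. specialize (Hxy n). unfold lc.
      pose proof (Rle_abs (x n - y n)). lra. }
    assert (H2 : Pfv p (lc (-1) 1 (lv x) (lv y)) <= s).
    { apply Dd; [apply Dc; auto|]. intro n. specialize (Hxy n). unfold lc.
      pose proof (Rle_abs (- (x n - y n))). rewrite Rabs_Ropp in H. lra. }
    rewrite Dl in H1, H2 by auto. unfold mu. apply Rabs_def1; lra.
  - split.
    + exists linf_one. change (Pfv p one <> 0). rewrite Fone. lra.
    + exists l0. intro x. unfold adjoint, mu.
      destruct (HV x) as [_ H0].
      assert (E : Vw T l0 x = lc 1 (- l0) (lv (T x)) (lv x)).
      { apply functional_extensionality; intro n. unfold Vw, lc. ring. }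
      rewrite E, Dl in H0 by auto. lra.
Qed.

Lemma closed_part T : weak_star_closed (Delta_T T).
Proof.
  intros mu Hba Hn.
  destruct (Req_dec (mu linf_one) 1) as [H1|H1].
  2:{ exists (linf_one :: nil), (Rabs (mu linf_one - 1)). split.
      - apply Rabs_pos_lt. lra.
      - intros nu _ Hnu [[_ [_ Hone]] _]. specialize (Hnu linf_one (or_introl eq_refl)).
        rewrite Hone in Hnu. rewrite <- Rabs_Ropp in Hnu. replace (- (1 - mu linf_one)) with (mu linf_one - 1) in Hnu by ring. lra. }
  destruct (classic (exists x, Defs.nonneg x /\ mu x < 0)) as [[x [Hx Hmx]]|Hpos].
  { exists (x :: nil), (- mu x). split; [lra|].
    intros nu _ Hnu [[_ [Hp _]] _]. specialize (Hnu x (or_introl eq_refl)). specialize (Hp x Hx).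
    pose proof (Rle_abs (nu x - mu x)). lra. }
  destruct (classic (exists x, mu (T x) <> mu (T linf_one) * mu x)) as [[x Hx]|Heig].
  2:{ exfalso. apply Hn. split; [split; [auto|split; auto]|split; [auto|split]].
      - intros x Hx. destruct (Rle_or_lt 0 (mu x)); auto. exfalso; apply Hpos; exists x; auto.
      - exists linf_one. lra.
      - exists (mu (T linf_one)). intro x. unfold adjoint.
        destruct (Req_dec (mu (T x)) (mu (T linf_one) * mu x)); auto. exfalso; apply Heig; exists x; auto. }
  set (d := Rabs (mu (T x) - mu (T linf_one) * mu x)).
  assert (Hd : 0 < d) by (apply Rabs_pos_lt; lra).
  set (K := 2 + Rabs (mu x) + Rabs (mu (T linf_one))).
  assert (HK : 0 < K) by (unfold K; pose proof (Rabs_pos (mu x)); pose proof (Rabs_pos (mu (T linf_one))); lra).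
  set (e := Rmin 1 (d / (2 * K))).
  assert (He : 0 < e) by (unfold e; apply Rmin_pos; [lra|apply Rdiv_lt_0_compat; lra]).
  assert (He1 : e <= 1) by apply Rmin_l.
  assert (HeK : e * K <= d / 2).
  { assert (e <= d / (2 * K)) by apply Rmin_r.
    replace (d/2) with (d / (2 * K) * K) by (field; lra). nra. }
  exists (linf_one :: T linf_one :: x :: T x :: nil), e. split; auto.
  intros nu _ Hnu [[_ [_ Hone]] [_ [_ [lam Hlam]]]].
  assert (Hl : lam = nu (T linf_one)).
  { specialize (Hlam linf_one). unfold adjoint in Hlam. rewrite Hone in Hlam. lra. }
  specialize (Hlam x). unfold adjoint in Hlam. subst lam.
  assert (A1 := Hnu (T linf_one) ltac:(simpl; tauto)).
  assert (A2 := Hnu x ltac:(simpl; tauto)).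
  assert (A3 := Hnu (T x) ltac:(simpl; tauto)).
  set (a := nu (T linf_one)) in *. set (b := nu x) in *.
  set (a0 := mu (T linf_one)) in *. set (b0 := mu x) in *.
  set (c := nu (T x)) in *. set (c0 := mu (T x)) in *.
  assert (Hab : Rabs (a * b - a0 * b0) <= e * K).
  { replace (a * b - a0 * b0) with ((a - a0) * (b - b0) + (a - a0) * b0 + a0 * (b - b0)) by ring.
    eapply Rle_trans; [apply Rabs_triang|].
    eapply Rle_trans; [apply Rplus_le_compat_r, Rabs_triang|].
    rewrite !Rabs_mult.
    pose proof (Rabs_pos (a - a0)). pose proof (Rabs_pos (b - b0)).
    pose proof (Rabs_pos b0). pose proof (Rabs_pos a0).
    unfold K. fold b0 a0.
    assert (Rabs (a - a0) * Rabs (b - b0) <= e * 1) by nra.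
    assert (Rabs (a - a0) * Rabs b0 <= e * Rabs b0) by nra.
    assert (Rabs a0 * Rabs (b - b0) <= Rabs a0 * e) by nra.
    nra. }
  assert (Hdd : d <= Rabs (c - c0) + Rabs (a * b - a0 * b0)).
  { unfold d. fold c0 a0 b0. replace (c0 - a0 * b0) with (-(c - c0) + (a * b - a0 * b0)) by (rewrite Hlam; ring).
    eapply Rle_trans; [apply Rabs_triang|]. rewrite Rabs_Ropp. lra. }
  assert (e <= e * K) by (unfold K in *; pose proof (Rabs_pos b0); pose proof (Rabs_pos a0); nra).
  lra.
Qed.

Theorem lemma2 (T : linf -> linf) :
  op_linear T -> op_continuous T -> op_positive T ->
  (exists mu, Delta_T T mu) /\ weak_star_closed (Delta_T T).
Proof.
  intros Tlin _ Tpos. split.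
  - apply delta_exists; auto.
  - apply closed_part.
Qed.
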